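(* Let $\alpha$ be a curve in $\mathbb{R}^3$, let $\alpha_T$ be its tangent indicatrix, and let $\beta$ be a Mannheim-direction curve of $\alpha_T$ (an $X$-direction curve of $\alpha_T$ with $N_\beta=B_T$). Then: (i) $\alpha$ is a straight line if and only if $\beta$ is a helix; (ii) $\alpha$ is a slant helix if and only if $\beta$ is a slant helix.
   Context: Let $\alpha:I\subset\mathbb{R}\to\mathbb{R}^3$ be a unit-speed curve with curvature $\kappa>0$, torsion $\tau$ and Frenet frame $\{T,N,B\}$. The Frenet frame with $N=T'/\kappa$ is used throughout. The tangent indicatrix of $\alpha$ is the curve $\alpha_T=T$ on the unit sphere. Its arc length is $s_T=\int\kappa\,ds$. Its Frenet apparatus is $\{T_T,N_T,B_T,\kappa_T,\tau_T\}$, with $\frac{dT_T}{ds_T}=\kappa_TN_T$, $\frac{dN_T}{ds_T}=-\kappa_TT_T+\tau_TB_T$ and $\frac{dB_T}{ds_T}=-\tau_TN_T$. Let $x,y,z$ be real functions of $s_T$ with $x^2+y^2+z^2=1$, and set $X=xT_T+yN_T+zB_T$. An integral curve $\beta$ of $X$, meaning $d\beta/ds_T=X$, is an $X$-direction curve of $\alpha_T$. It is regarded as a unit-speed Frenet curve with frame $\{T_\beta=X,N_\beta,B_\beta\}$, curvature $\kappa_\beta>0$ and torsion $\tau_\beta$. $\beta$ is a Mannheim-direction curve of $\alpha_T$ if $N_\beta=B_T$. A curve with curvature $k>0$ and torsion $t$ is a helix if its unit tangent makes a constant angle with a fixed line; equivalently, $t/k$ is constant. It is a slant helix if its principal normal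 makes a constant angle with a fixed line; equivalently, $\frac{k^2}{(k^2+t^2)^{3/2}}(t/k)'$ is constant, where $'$ is the derivative with respect to arc length. *)

(* Defs.v *)
(* Vectors of R^3 are triples (x, y, z) : R * R * R; Coquelicot's
   product normed-module structure gives [is_derive] for R -> R^3
   (componentwise derivative). *)
From Stdlib Require Import Reals.
From Coquelicot Require Import Coquelicot.
Open Scope R_scope.

Definition vec := (R * R * R)%type.

Definition vx (u : vec) : R := fst (fst u).
Definition vy (u : vec) : R := snd (fst u).
Definition vz (u : vec) : R := snd u.

Definition vadd (u v : vec) : vec := (vx u + vx v, vy u + vy v, vz u + vz v).
Definition vscal (a : R) (u : vec) : vec := (a * vx u, a * vy u, a * vz u).
Definition dot (u v : vec) : R := vx u * vx v + vy u * vy v + vz u * vz v.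
Definition cross (u v : vec) : vec :=
  (vy u * vz v - vz u * vy v, vz u * vx v - vx u * vz v, vx u * vy v - vy u * vx v).

Definition ointerval (a b : Rbar) (s : R) : Prop :=
  Rbar_lt a s /\ Rbar_lt s b.

Definition frenet (D : R -> Prop) (c T N B : R -> vec) (k t : R -> R) : Prop :=
  forall s, D s ->
    is_derive c s (T s) /\
    is_derive T s (vscal (k s) (N s)) /\
    is_derive N s (vadd (vscal (- k s) (T s)) (vscal (t s) (B s))) /\
    is_derive B s (vscal (- t s) (N s)) /\
    0 < k s /\
    dot (T s) (T s) = 1 /\ dot (N s) (N s) = 1 /\ dot (T s) (N s) = 0 /\
    B s = cross (T s) (N s).

Definition straight_line (D : R -> Prop) (c : R -> vec) : Prop :=
  exists (p v : vec), v <> (0, 0, 0) /\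
    forall s, D s -> exists lambda : R, c s = vadd p (vscal lambda v).

Definition helix (D : R -> Prop) (k t : R -> R) : Prop :=
  exists C : R, forall s, D s -> t s / k s = C.

Definition slant_helix (D : R -> Prop) (k t : R -> R) : Prop :=
  exists C : R, forall s, D s ->
    ex_derive (fun u => t u / k u) s /\
    (k s) ^ 2 / Rpower ((k s) ^ 2 + (t s) ^ 2) (3 / 2)
      * Derive (fun u => t u / k u) s = C.

Definition image_dom (I : R -> Prop) (phi : R -> R) (u : R) : Prop :=
  exists s, I s /\ phi s = u.

(* Main.v *)
Require Import Defs.
From Stdlib Require Import Reals Lra Psatz Classical.
From Coquelicot Require Import Coquelicot.
Open Scope R_scope.

Lemma vec_eta (u : vec) : u = (vx u, vy u, vz u).
Proof. destruct u as [[? ?] ?]; reflexivity. Qed.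

Lemma der_vx (f : R -> vec) (s : R) (l : vec) : is_derive f s l -> is_derive (fun t => vx (f t)) s (vx l).
Proof.
intros H. unfold is_derive in *. eapply filterdiff_ext_lin.
apply (filterdiff_comp' f (fun t => fst (fst t)) s _ (fun t => fst (fst t)) H).
apply filterdiff_linear. apply (is_linear_comp (fun t => fst t) (fun t => fst t)); apply is_linear_fst.
intros y. reflexivity. Qed.

Lemma der_vy (f : R -> vec) (s : R) (l : vec) : is_derive f s l -> is_derive (fun t => vy (f t)) s (vy l).
Proof.
intros H. unfold is_derive in *. eapply filterdiff_ext_lin.
apply (filterdiff_comp' f (fun t => snd (fst t)) s _ (fun t => snd (fst t)) H).
apply filterdiff_linear. apply (is_linear_comp (fun t => fst t) (fun t => snd t)). apply is_linear_fst. apply is_linear_snd.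
intros y. reflexivity. Qed.

Lemma der_vz (f : R -> vec) (s : R) (l : vec) : is_derive f s l -> is_derive (fun t => vz (f t)) s (vz l).
Proof.
intros H. unfold is_derive in *. eapply filterdiff_ext_lin.
apply (filterdiff_comp' f (fun t => snd t) s _ (fun t => snd t) H).
apply filterdiff_linear. apply is_linear_snd.
intros y. reflexivity. Qed.

Lemma der_val (f : R -> R) (s l l' : R) : is_derive f s l -> l = l' -> is_derive f s l'.
Proof. intros H ->; exact H. Qed.

Lemma der_mul (f g : R -> R) (s df dg : R) : is_derive f s df -> is_derive g s dg ->
  is_derive (fun t => f t * g t) s (df * g s + f s * dg).
Proof. intros Hf Hg. apply (is_derive_mult f g s df dg Hf Hg). intros; apply Rmult_comm. Qed.

Lemma der_add (f g : R -> R) (s df dg : R) : is_derive f s df -> is_derive g s dg ->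
  is_derive (fun t => f t + g t) s (df + dg).
Proof. intros Hf Hg. apply (is_derive_plus f g s df dg Hf Hg). Qed.

Lemma ddot (u v : R -> vec) (s : R) (du dv : vec) : is_derive u s du -> is_derive v s dv ->
  is_derive (fun t => dot (u t) (v t)) s (dot du (v s) + dot (u s) dv).
Proof.
intros Hu Hv.
pose proof (der_mul _ _ s _ _ (der_vx _ _ _ Hu) (der_vx _ _ _ Hv)) as H1.
pose proof (der_mul _ _ s _ _ (der_vy _ _ _ Hu) (der_vy _ _ _ Hv)) as H2.
pose proof (der_mul _ _ s _ _ (der_vz _ _ _ Hu) (der_vz _ _ _ Hv)) as H3.
pose proof (der_add _ _ s _ _ (der_add _ _ s _ _ H1 H2) H3) as H.
apply (der_val _ _ _ _ H). unfold dot. ring. Qed.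

Lemma dcomp (f : R -> vec) (g : R -> R) (s : R) (df : vec) (dg : R) : is_derive f (g s) df -> is_derive g s dg ->
  is_derive (fun t => f (g t)) s (vscal dg df).
Proof.
intros Hf Hg. pose proof (is_derive_comp f g s df dg Hf Hg) as H.
replace (vscal dg df) with (scal dg df). exact H.
destruct df as [[p q] r]. reflexivity. Qed.

Lemma dcompR (f : R -> R) (g : R -> R) (s df dg : R) : is_derive f (g s) df -> is_derive g s dg ->
  is_derive (fun t => f (g t)) s (dg * df).
Proof. intros Hf Hg. exact (is_derive_comp f g s df dg Hf Hg). Qed.

Lemma der_uniq (f : R -> R) (s l1 l2 : R) : is_derive f s l1 -> is_derive f s l2 -> l1 = l2.
Proof. intros H1 H2. apply is_derive_unique in H1. apply is_derive_unique in H2. congruence. Qed.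

Lemma der_uniqv (f : R -> vec) (s : R) (l1 l2 : vec) : is_derive f s l1 -> is_derive f s l2 -> l1 = l2.
Proof. intros H1 H2. rewrite (vec_eta l1), (vec_eta l2).
f_equal; [f_equal|].
- eapply der_uniq; [apply der_vx, H1 | apply der_vx, H2].
- eapply der_uniq; [apply der_vy, H1 | apply der_vy, H2].
- eapply der_uniq; [apply der_vz, H1 | apply der_vz, H2].
Qed.

Lemma loc_I a b s : ointerval a b s -> locally s (ointerval a b).
Proof.
intros H. apply (open_and (T := R_UniformSpace) (fun u : R => Rbar_lt a u) (fun u : R => Rbar_lt u b)).
apply open_Rbar_gt. apply open_Rbar_lt. exact H. Qed.

Lemma der_cont (f : R -> R) (s l : R) : is_derive f s l -> continuity_pt f s.
Proof. intros H. apply continuity_pt_filterlim.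
assert (E : ex_derive f s) by (exists l; exact H).
exact (ex_derive_continuous f s E). Qed.

Lemma dot_comm u v : dot u v = dot v u. Proof. unfold dot; ring. Qed.
Lemma dot_scal_l a u v : dot (vscal a u) v = a * dot u v. Proof. unfold dot, vscal, vx, vy, vz; simpl; ring. Qed.
Lemma dot_scal_r a u v : dot v (vscal a u) = a * dot v u. Proof. unfold dot, vscal, vx, vy, vz; simpl; ring. Qed.
Lemma dot_add_l u w v : dot (vadd u w) v = dot u v + dot w v. Proof. unfold dot, vadd, vx, vy, vz; simpl; ring. Qed.
Lemma dot_add_r u w v : dot v (vadd u w) = dot v u + dot v w. Proof. unfold dot, vadd, vx, vy, vz; simpl; ring. Qed.
Lemma dot_cross_1 u v : dot u (cross u v) = 0. Proof. unfold dot, cross, vx, vy, vz; simpl; ring. Qed.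
Lemma dot_cross_2 u v : dot v (cross u v) = 0. Proof. unfold dot, cross, vx, vy, vz; simpl; ring. Qed.
Lemma lagrange u v : dot (cross u v) (cross u v) = dot u u * dot v v - dot u v ^ 2.
Proof. unfold dot, cross, vx, vy, vz; simpl; ring. Qed.
Lemma bac w u a c : dot w (cross u (cross a c)) = dot u c * dot w a - dot u a * dot w c.
Proof. unfold dot, cross, vx, vy, vz; simpl; ring. Qed.
Lemma triple w u v : dot w (cross u v) = dot u (cross v w).
Proof. unfold dot, cross, vx, vy, vz; simpl; ring. Qed.
Lemma cross_scal_r u a v : cross u (vscal a v) = vscal a (cross u v).
Proof. unfold cross, vscal, vx, vy, vz; simpl; f_equal; [f_equal|]; ring. Qed.
Lemma cross_add_r u v w : cross u (vadd v w) = vadd (cross u v) (cross u w).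
Proof. unfold cross, vadd, vx, vy, vz; simpl; f_equal; [f_equal|]; ring. Qed.
Lemma vscal_vscal a b u : vscal a (vscal b u) = vscal (a * b) u.
Proof. unfold vscal, vx, vy, vz; simpl; f_equal; [f_equal|]; ring. Qed.

Lemma Rpower_32 r : 0 < r -> Rpower (r ^ 2) (3/2) = r ^ 3.
Proof.
intros Hr. rewrite <- (Rpower_pow 2 r Hr). rewrite Rpower_mult.
replace (INR 2 * (3/2)) with (INR 3) by (simpl; field). apply Rpower_pow; exact Hr. Qed.


Lemma oint_between a b x y t : ointerval a b x -> ointerval a b y -> x <= t <= y -> ointerval a b t.
Proof.
intros [Ha Hb] [Ha' Hb'] Ht. split.
- destruct a as [r| |]; simpl in *; lra.
- destruct b as [r| |]; simpl in *; lra.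
Qed.

Lemma incr_phi a b (phi kappa : R -> R)
  (Hphi : forall s, ointerval a b s -> is_derive phi s (kappa s))
  (Hk : forall s, ointerval a b s -> 0 < kappa s) x y :
  ointerval a b x -> ointerval a b y -> x < y -> phi x < phi y.
Proof.
intros Ix Iy Hxy.
destruct (MVT_gen phi x y kappa) as [c [Hc E]].
- rewrite Rmin_left, Rmax_right by lra. intros t Ht. apply Hphi.
  apply (oint_between a b x y); auto; lra.
- rewrite Rmin_left, Rmax_right by lra. intros t Ht. apply (der_cont _ _ (kappa t)). apply Hphi.
  apply (oint_between a b x y); auto; lra.
- rewrite Rmin_left, Rmax_right in Hc by lra.
  assert (0 < kappa c) by (apply Hk; apply (oint_between a b x y); auto).
  nra.
Qed.

Lemma J_open a b (phi kappa : R -> R)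
  (Hphi : forall s, ointerval a b s -> is_derive phi s (kappa s))
  (Hk : forall s, ointerval a b s -> 0 < kappa s) :
  forall u, image_dom (ointerval a b) phi u -> locally u (image_dom (ointerval a b) phi).
Proof.
intros u [s [Is <-]].
destruct (loc_I a b s Is) as [eps He].
assert (HI : forall y, Rabs (y - s) < eps -> ointerval a b y) by (intros y Hy; apply He; exact Hy).
pose proof (cond_pos eps) as Hep.
set (p1 := s - eps/2). set (p2 := s + eps/2).
assert (I1 : ointerval a b p1) by (apply HI; unfold p1; rewrite Rabs_left; lra).
assert (I2 : ointerval a b p2) by (apply HI; unfold p2; rewrite Rabs_right; lra).
assert (L1 : phi p1 < phi s) by (apply (incr_phi a b phi kappa); auto; unfold p1; lra).
assert (L2 : phi s < phi p2) by (apply (incr_phi a b phi kappa); auto; unfold p2; lra).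
assert (Hd : 0 < Rmin (phi s - phi p1) (phi p2 - phi s)) by (apply Rmin_pos; lra).
exists (mkposreal _ Hd). intros w Hw.
change (Rabs (w - phi s) < Rmin (phi s - phi p1) (phi p2 - phi s)) in Hw.
assert (W1 : Rmin (phi s - phi p1) (phi p2 - phi s) <= phi s - phi p1) by apply Rmin_l.
assert (W2 : Rmin (phi s - phi p1) (phi p2 - phi s) <= phi p2 - phi s) by apply Rmin_r.
apply Rabs_def2 in Hw.
destruct (Ranalysis5.IVT_interv (fun t => phi t - w) p1 p2) as [z [Hz E]].
- intros t Ht. apply continuity_pt_minus. apply (der_cont _ _ (kappa t)). apply Hphi.
  apply (oint_between a b p1 p2); auto. apply continuity_pt_const. intros ? ?; reflexivity.
- unfold p1, p2; lra.
- lra.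
- lra.
- exists z. split. apply (oint_between a b p1 p2); auto. lra.
Qed.

Lemma sign_const a b (f : R -> R) :
  (forall t, ointerval a b t -> continuity_pt f t) ->
  (forall t, ointerval a b t -> f t <> 0) ->
  forall s1 s2, ointerval a b s1 -> ointerval a b s2 -> 0 < f s1 -> 0 < f s2.
Proof.
intros Hc Hnz s1 s2 I1 I2 H1.
destruct (Rlt_or_le 0 (f s2)) as [H|H]; auto.
assert (H2 : f s2 < 0) by (destruct H; auto; exfalso; apply (Hnz s2 I2); auto).
exfalso.
destruct (Rtotal_order s1 s2) as [Hlt|[Heq|Hgt]].
- destruct (Ranalysis5.IVT_interv (fun t => - f t) s1 s2) as [z [Hz E]].
  + intros t Ht. apply continuity_pt_opp. apply Hc. apply (oint_between a b s1 s2); auto.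
  + exact Hlt.
  + lra.
  + lra.
  + apply (Hnz z). apply (oint_between a b s1 s2); auto. lra.
- subst. lra.
- destruct (Ranalysis5.IVT_interv f s2 s1) as [z [Hz E]].
  + intros t Ht. apply Hc. apply (oint_between a b s2 s1); auto.
  + exact Hgt.
  + lra.
  + lra.
  + apply (Hnz z). apply (oint_between a b s2 s1); auto. lra.
Qed.


Lemma frame_facts (T N B : vec) : dot T T = 1 -> dot N N = 1 -> dot T N = 0 -> B = cross T N ->
  dot B T = 0 /\ dot B N = 0 /\ dot B B = 1 /\ dot N T = 0 /\ dot T B = 0 /\ dot N B = 0.
Proof.
intros tt nn tn ->. rewrite (dot_comm (cross T N) T), (dot_comm (cross T N) N), dot_cross_1, dot_cross_2, lagrange, tt, nn, tn, dot_comm, tn.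
repeat split; ring. Qed.

Lemma beta_part (D : R -> Prop) (HD : forall u, D u -> locally u D)
  (alphaT TT NT BT : R -> vec) (kappaT tauT : R -> R)
  (HF : frenet D alphaT TT NT BT kappaT tauT)
  (x y z : R -> R)
  (beta Tb Nb Bb : R -> vec) (kappab taub : R -> R)
  (Hxyz : forall sT, D sT -> x sT ^ 2 + y sT ^ 2 + z sT ^ 2 = 1)
  (HX : forall sT, D sT ->
          Tb sT = vadd (vadd (vscal (x sT) (TT sT)) (vscal (y sT) (NT sT)))
                       (vscal (z sT) (BT sT)))
  (Hbeta : frenet D beta Tb Nb Bb kappab taub)
  (HM : forall sT, D sT -> Nb sT = BT sT) :
  forall u, D u -> kappab u = tauT u * y u /\ taub u = tauT u * x u /\
    x u ^ 2 + y u ^ 2 = 1 /\ y u <> 0 /\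
    is_derive (fun t => taub t / kappab t) u (kappaT u / y u ^ 2) /\ ex_derive y u.
Proof.
assert (P1 : forall u, D u -> x u = dot (Tb u) (TT u) /\ y u = dot (Tb u) (NT u) /\ z u = 0
   /\ dot (Tb u) (BT u) = 0).
{ intros u Du.
  destruct (HF u Du) as [_ [_ [_ [_ [_ [tt [nn [tn Bdef]]]]]]]].
  destruct (frame_facts _ _ _ tt nn tn Bdef) as [bt [bn [bb [nt [tb nb]]]]].
  destruct (Hbeta u Du) as [_ [_ [_ [_ [_ [_ [_ [tbnb _]]]]]]]].
  rewrite HM in tbnb by exact Du.
  rewrite HX in tbnb |- * by exact Du.
  rewrite !dot_add_l, !dot_scal_l in tbnb.
  rewrite tb, nb, bb in tbnb.
  assert (ez : z u = 0) by lra.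
  repeat split; rewrite ?dot_add_l, ?dot_scal_l; rewrite ?tt, ?nn, ?tn, ?bt, ?bn, ?bb, ?nt, ?tb, ?nb; lra. }
assert (P2 : forall u, D u -> kappab u = tauT u * y u /\ taub u = tauT u * x u).
{ intros u Du.
  destruct (HF u Du) as [_ [dT [dN [dB [_ [tt [nn [tn Bdef]]]]]]]].
  destruct (frame_facts _ _ _ tt nn tn Bdef) as [bt [bn [bb [nt [tb nb]]]]].
  destruct (Hbeta u Du) as [_ [dTb [dNb [_ [_ [tbtb [nbnb [tbnb Bbdef]]]]]]]].
  destruct (P1 u Du) as [ex [ey [ez ezz]]].
  split.
  -
    pose proof (ddot _ _ u _ _ dTb dB) as H.
    assert (H0 : is_derive (fun t => dot (Tb t) (BT t)) u 0).
    { apply (is_derive_ext_loc (fun _ => 0)). 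
      apply (filter_imp D). intros t Dt. symmetry. apply (P1 t Dt). apply HD; exact Du.
      apply (is_derive_const 0). }
    pose proof (der_uniq _ _ _ _ H H0) as E.
    rewrite dot_scal_l, dot_scal_r, HM, bb, <- ey in E by exact Du. lra.
  - assert (HN : is_derive Nb u (vscal (- tauT u) (NT u))).
    { apply (is_derive_ext_loc BT). apply (filter_imp D). intros t Dt. symmetry; apply HM; exact Dt.
      apply HD; exact Du. exact dB. }
    pose proof (der_uniqv _ _ _ _ dNb HN) as E.
    assert (E2 : dot (vadd (vscal (- kappab u) (Tb u)) (vscal (taub u) (Bb u))) (Bb u)
               = dot (vscal (- tauT u) (NT u)) (Bb u)) by (rewrite E; reflexivity).
    rewrite dot_add_l, !dot_scal_l in E2.
    rewrite Bbdef in E2.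
    rewrite dot_cross_1, lagrange, tbtb, nbnb, tbnb in E2.
    rewrite HM in E2 by exact Du. rewrite Bdef in E2. rewrite bac in E2.
    rewrite Bdef in bn. 
    rewrite <- ey, <- ex, nn, (dot_comm (NT u) (TT u)), tn in E2. lra. }
intros u Du.
destruct (P2 u Du) as [ek et].
destruct (P1 u Du) as [ex [ey [ez ezz]]].
destruct (HF u Du) as [_ [dT [dN [dB [kTpos [tt [nn [tn Bdef]]]]]]]].
destruct (frame_facts _ _ _ tt nn tn Bdef) as [bt [bn [bb [nt [tb nb]]]]].
destruct (Hbeta u Du) as [_ [dTb [dNb [_ [kbpos [tbtb [nbnb [tbnb Bbdef]]]]]]]].
assert (Hyz : y u <> 0) by (intro Hy0; rewrite Hy0 in ek; lra).
assert (Hxy : x u ^ 2 + y u ^ 2 = 1) by (pose proof (Hxyz u Du); rewrite ez in H; lra).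
assert (Dx : is_derive x u (kappaT u * y u)).
{ apply (is_derive_ext_loc (fun t => dot (Tb t) (TT t))).
  apply (filter_imp D). intros t Dt. symmetry; apply (P1 t Dt). apply HD; exact Du.
  apply (der_val _ _ _ _ (ddot _ _ u _ _ dTb dT)).
  rewrite dot_scal_l, dot_scal_r, HM, bt, <- ey by exact Du. ring. }
assert (Dy : is_derive y u (- kappaT u * x u)).
{ apply (is_derive_ext_loc (fun t => dot (Tb t) (NT t))).
  apply (filter_imp D). intros t Dt. symmetry; apply (P1 t Dt). apply HD; exact Du.
  apply (der_val _ _ _ _ (ddot _ _ u _ _ dTb dN)).
  rewrite dot_scal_l, dot_add_r, !dot_scal_r, HM, bn, <- ex, ezz by exact Du. ring. }
refine (conj ek (conj et (conj Hxy (conj Hyz (conj _ (ex_intro _ _ Dy)))))).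
apply (is_derive_ext_loc (V := R_NormedModule) (fun t => x t / y t) (fun t => taub t / kappab t)).
{ apply (filter_imp D). intros t Dt. destruct (P2 t Dt) as [ek' et'].
  destruct (Hbeta t Dt) as [_ [_ [_ [_ [kb' _]]]]].
  change (x t / y t = taub t / kappab t :> R). rewrite ek', et'. field.
  split; intro Hc; rewrite Hc in ek'; nra.
  apply HD; exact Du. }
apply (der_val _ _ _ _ (is_derive_div _ _ u _ _ Dx Dy Hyz)).
change ((kappaT u * y u * y u - x u * (- kappaT u * x u)) / y u ^ 2 = kappaT u / y u ^ 2 :> R).
rewrite <- (Rmult_1_r (kappaT u)) at 3. rewrite <- Hxy. field. exact Hyz.
Qed.


Lemma vscal_1 u : vscal 1 u = u.
Proof. unfold vscal; rewrite (vec_eta u) at 4; f_equal; [f_equal|]; ring. Qed.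

Lemma vscal_inj k u v : k <> 0 -> vscal k u = vscal k v -> u = v.
Proof. intros Hk E. rewrite <- (vscal_1 u), <- (vscal_1 v).
replace 1 with (/k * k) by (field; exact Hk). rewrite <- !vscal_vscal, E. reflexivity. Qed.

Lemma id_g n t p q : dot (cross n (vadd (vscal p t) (vscal q (cross t n)))) t = q * (dot n n * dot t t - dot n t ^ 2).
Proof. unfold dot, cross, vadd, vscal, vx, vy, vz; simpl; ring. Qed.
Lemma id_h n t p q : dot (cross n (vadd (vscal p t) (vscal q (cross t n)))) (cross t n) = - p * (dot t t * dot n n - dot t n ^ 2).
Proof. unfold dot, cross, vadd, vscal, vx, vy, vz; simpl; ring. Qed.
Lemma id_nn t n p q : dot (vadd (vscal p t) (vscal q (cross t n))) (vadd (vscal p t) (vscal q (cross t n)))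
   = p ^ 2 * dot t t + q ^ 2 * (dot t t * dot n n - dot t n ^ 2).
Proof. unfold dot, cross, vadd, vscal, vx, vy, vz; simpl; ring. Qed.
Lemma id_nt t n p q : dot (vadd (vscal p t) (vscal q (cross t n))) t = p * dot t t.
Proof. unfold dot, cross, vadd, vscal, vx, vy, vz; simpl; ring. Qed.
Lemma id_nb t n p q : dot (vadd (vscal p t) (vscal q (cross t n))) (cross t n) = q * (dot t t * dot n n - dot t n ^ 2).
Proof. unfold dot, cross, vadd, vscal, vx, vy, vz; simpl; ring. Qed.
Lemma cross_scal_dot n w t r : r * dot (cross n w) t = dot (cross n (vscal r w)) t.
Proof. unfold dot, cross, vscal, vx, vy, vz; simpl; ring. Qed.

Lemma alpha_part (a b : Rbar)
  (alpha T N B : R -> vec) (kappa tau : R -> R)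
  (Halpha : frenet (ointerval a b) alpha T N B kappa tau)
  (phi : R -> R)
  (Hphi : forall s, ointerval a b s -> is_derive phi s (kappa s))
  (alphaT TT NT BT : R -> vec) (kappaT tauT : R -> R)
  (HalphaT : forall s, ointerval a b s -> alphaT (phi s) = T s)
  (HF : frenet (image_dom (ointerval a b) phi) alphaT TT NT BT kappaT tauT) :
  forall s, ointerval a b s ->
    ex_derive (fun u => tau u / kappa u) s /\
    kappa s ^ 2 / Rpower (kappa s ^ 2 + tau s ^ 2) (3 / 2)
      * Derive (fun u => tau u / kappa u) s = tauT (phi s) / kappaT (phi s).
Proof.
assert (HJ : forall s, ointerval a b s -> image_dom (ointerval a b) phi (phi s))
  by (intros s Is; exists s; auto).
assert (Q1 : forall s, ointerval a b s -> TT (phi s) = N s).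
{ intros s Is.
  destruct (HF (phi s) (HJ s Is)) as [dA _].
  destruct (Halpha s Is) as [_ [dT [_ [_ [kp _]]]]].
  pose proof (dcomp alphaT phi s _ _ dA (Hphi s Is)) as H.
  assert (H2 : is_derive T s (vscal (kappa s) (TT (phi s)))).
  { apply (is_derive_ext_loc (fun t => alphaT (phi t)) T).
    apply (filter_imp (ointerval a b)). intros t It. apply HalphaT; exact It.
    apply loc_I; exact Is. exact H. }
  pose proof (der_uniqv _ _ _ _ dT H2) as E.
  symmetry. apply (vscal_inj (kappa s)). lra. exact E. }
assert (Q2 : forall s, ointerval a b s ->
   vscal (kappa s * kappaT (phi s)) (NT (phi s)) = vadd (vscal (- kappa s) (T s)) (vscal (tau s) (B s))).
{ intros s Is.
  destruct (HF (phi s) (HJ s Is)) as [_ [dTT _]].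
  destruct (Halpha s Is) as [_ [_ [dN _]]].
  pose proof (dcomp TT phi s _ _ dTT (Hphi s Is)) as H.
  assert (H2 : is_derive N s (vscal (kappa s) (vscal (kappaT (phi s)) (NT (phi s))))).
  { apply (is_derive_ext_loc (fun t => TT (phi t)) N).
    apply (filter_imp (ointerval a b)). intros t It. apply Q1; exact It.
    apply loc_I; exact Is. exact H. }
  pose proof (der_uniqv _ _ _ _ dN H2) as E.
  rewrite E, vscal_vscal. reflexivity. }
assert (Q3 : forall s, ointerval a b s ->
  let r := kappa s * kappaT (phi s) in
  r * dot (BT (phi s)) (T s) = tau s /\ r * dot (BT (phi s)) (B s) = kappa s /\
  r ^ 2 = kappa s ^ 2 + tau s ^ 2 /\ r * dot (NT (phi s)) (T s) = - kappa s /\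
  r * dot (NT (phi s)) (B s) = tau s /\ dot (BT (phi s)) (N s) = 0 /\ 0 < r).
{ intros s Is r.
  destruct (HF (phi s) (HJ s Is)) as [_ [_ [_ [_ [kTp [tt [nn [tn Bdef]]]]]]]].
  destruct (Halpha s Is) as [_ [_ [_ [_ [kp [tt' [nn' [tn' Bdef']]]]]]]].
  pose proof (Q2 s Is) as E. fold r in E.
  rewrite Q1 in Bdef by exact Is. rewrite Bdef, Bdef'. rewrite Bdef' in E.
  assert (NN := id_nn (T s) (N s) (- kappa s) (tau s)).
  rewrite <- E, dot_scal_l, dot_scal_r, nn, tt', nn', tn' in NN.
  split; [|split; [|split; [|split; [|split; [|split]]]]].
  - rewrite cross_scal_dot, E, id_g, tt', nn', (dot_comm (N s) (T s)), tn'. ring.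
  - rewrite cross_scal_dot, E, id_h, tt', nn', tn'. ring.
  - lra.
  - rewrite <- dot_scal_l, E, id_nt, tt'. ring.
  - rewrite <- dot_scal_l, E, id_nb, tt', nn', tn'. ring.
  - rewrite dot_comm, dot_cross_1. reflexivity.
  - unfold r. apply Rmult_lt_0_compat; assumption. }
intros s Is.
destruct (Q3 s Is) as [g0 [h0 [r2 [nt [nb [bn rp]]]]]].
set (r := kappa s * kappaT (phi s)) in *.
destruct (HF (phi s) (HJ s Is)) as [_ [_ [_ [dBT [kTp _]]]]].
destruct (Halpha s Is) as [_ [dT [_ [dB [kp _]]]]].
pose proof (dcomp BT phi s _ _ dBT (Hphi s Is)) as HB.
pose proof (ddot _ _ s _ _ HB dT) as Dg.
pose proof (ddot _ _ s _ _ HB dB) as Dh.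
rewrite !dot_scal_l, !dot_scal_r in Dg, Dh.
set (g := fun t => dot (BT (phi t)) (T t)) in *.
set (h := fun t => dot (BT (phi t)) (B t)) in *.
assert (hs : h s <> 0) by (intro Hc; unfold h in Hc; rewrite Hc in h0; lra).
pose proof (is_derive_div g h s _ _ Dg Dh hs) as Df.
assert (Df2 : is_derive (fun u => tau u / kappa u) s
  (((kappa s * (- tauT (phi s) * dot (NT (phi s)) (T s)) + kappa s * dot (BT (phi s)) (N s)) * h s -
       g s * (kappa s * (- tauT (phi s) * dot (NT (phi s)) (B s)) + - tau s * dot (BT (phi s)) (N s))) /
      h s ^ 2)).
{ apply (is_derive_ext_loc (V := R_NormedModule) (fun t => g t / h t)).
  apply (filter_imp (ointerval a b)). intros t It.
  destruct (Q3 t It) as [g1 [h1 [_ [_ [_ [_ rp1]]]]]].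
  destruct (Halpha t It) as [_ [_ [_ [_ [kp1 _]]]]].
  change (g t / h t = tau t / kappa t :> R). unfold g, h. rewrite <- h1 at 1. rewrite <- g1. field.
  destruct (HF (phi t) (HJ t It)) as [_ [_ [_ [_ [kTp1 _]]]]].
  split; [intro Hc; rewrite Hc in h1; lra | split; lra].
  apply loc_I; exact Is. exact Df. }
split. eexists; exact Df2.
rewrite (is_derive_unique (fun u : R => tau u / kappa u) s _ Df2).
rewrite <- r2, Rpower_32 by exact rp.
unfold g, h.
rewrite bn.
assert (e1 : dot (NT (phi s)) (T s) = - kappa s / r) by (field_simplify_eq; [lra | lra]).
assert (e2 : dot (NT (phi s)) (B s) = tau s / r) by (field_simplify_eq; [lra | lra]).
assert (e3 : dot (BT (phi s)) (T s) = tau s / r) by (field_simplify_eq; [lra | lra]).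
assert (e4 : dot (BT (phi s)) (B s) = kappa s / r) by (field_simplify_eq; [lra | lra]).
rewrite e1, e2, e3, e4.
transitivity (kappa s * tauT (phi s) * (kappa s ^ 2 + tau s ^ 2) / r ^ 3).
field. lra.
rewrite <- r2. unfold r. field. lra.
Qed.


Lemma gram v t n : (dot v (cross t n)) ^ 2 =
  dot v v * (dot t t * dot n n - dot t n * dot n t)
  - dot v t * (dot t v * dot n n - dot t n * dot n v)
  + dot v n * (dot t v * dot n t - dot t t * dot n v).
Proof. unfold dot, cross, vx, vy, vz; simpl; ring. Qed.

Lemma v_zero (t n v : vec) : dot t t = 1 -> dot n n = 1 -> dot t n = 0 ->
  (forall w, dot t (cross v w) = 0) -> (forall w, dot n (cross v w) = 0) -> v = (0,0,0).
Proof.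
intros tt nn tn Ht Hn.
pose proof (Hn t) as h1. pose proof (Ht (cross t n)) as h2. pose proof (Hn (cross t n)) as h3.
rewrite triple in h1. rewrite bac in h2, h3.
rewrite tt, tn in h2. rewrite (dot_comm n t), nn, tn in h3.
assert (vt : dot v t = 0) by lra. assert (vn : dot v n = 0) by lra.
pose proof (gram v t n) as G. rewrite (dot_comm t v), (dot_comm n v), (dot_comm n t), vt, vn, tt, nn, tn, h1 in G.
assert (vv : dot v v = 0) by lra.
destruct v as [[p q] r]. unfold dot, vx, vy, vz in vv; simpl in vv.
assert (p = 0) by nra. assert (q = 0) by nra. assert (r = 0) by nra. subst; reflexivity.
Qed.

Lemma der_constv (c : vec) (s : R) : is_derive (fun _ : R => c) s (0,0,0).
Proof. exact (is_derive_const c s). Qed.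

Lemma not_line (a b : Rbar) (alpha T N B : R -> vec) (kappa tau : R -> R)
  (Halpha : frenet (ointerval a b) alpha T N B kappa tau) s0 :
  ointerval a b s0 -> ~ straight_line (ointerval a b) alpha.
Proof.
intros Is0 [p [v [Hv Hl]]]. apply Hv.
assert (S1 : forall w t, ointerval a b t -> dot (T t) (cross v w) = 0).
{ intros w t It. destruct (Halpha t It) as [dA _].
  pose proof (ddot _ _ t _ _ dA (der_constv (cross v w) t)) as H.
  assert (H0 : is_derive (fun t => dot (alpha t) (cross v w)) t 0).
  { apply (is_derive_ext_loc (V := R_NormedModule) (fun _ => dot p (cross v w))).
    apply (filter_imp (ointerval a b)). intros t' It'. destruct (Hl t' It') as [lam E].
    change (dot p (cross v w) = dot (alpha t') (cross v w) :> R).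
    rewrite E, dot_add_l, dot_scal_l, dot_cross_1. ring.
    apply loc_I; exact It. exact (is_derive_const (V := R_NormedModule) _ _). }
  pose proof (der_uniq _ _ _ _ H H0) as E. unfold dot at 2 in E. simpl in E. rewrite <- E. unfold vx, vy, vz; simpl. ring. }
assert (S2 : forall w, dot (N s0) (cross v w) = 0).
{ intros w. destruct (Halpha s0 Is0) as [_ [dT [_ [_ [kp _]]]]].
  pose proof (ddot _ _ s0 _ _ dT (der_constv (cross v w) s0)) as H.
  assert (H0 : is_derive (fun t => dot (T t) (cross v w)) s0 0).
  { apply (is_derive_ext_loc (V := R_NormedModule) (fun _ => 0)).
    apply (filter_imp (ointerval a b)). intros t' It'. symmetry. apply S1; exact It'.
    apply loc_I; exact Is0. exact (is_derive_const (V := R_NormedModule) _ _). }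
  pose proof (der_uniq _ _ _ _ H H0) as E. rewrite dot_scal_l in E. unfold dot at 2 in E. simpl in E.
  unfold vx, vy, vz in E; simpl in E.
  assert (E' : kappa s0 * dot (N s0) (cross v w) = 0) by lra.
  apply Rmult_integral in E'. destruct E'; [lra | assumption]. }
destruct (Halpha s0 Is0) as [_ [_ [_ [_ [_ [tt [nn [tn _]]]]]]]].
apply (v_zero (T s0) (N s0) v tt nn tn); auto.
Qed.

Lemma sigma_b_val (kb tb kT tT x y : R) : kb = tT * y -> tb = tT * x -> x ^ 2 + y ^ 2 = 1 ->
  y <> 0 -> 0 < kb ->
  kb ^ 2 / Rpower (kb ^ 2 + tb ^ 2) (3 / 2) * (kT / y ^ 2) = kT / Rabs tT.
Proof.
intros ek et Hxy Hy kp.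
assert (tT <> 0) by (intro Hc; rewrite Hc in ek; lra).
assert (Ha : 0 < Rabs tT) by (apply Rabs_pos_lt; auto).
replace (kb ^ 2 + tb ^ 2) with (Rabs tT ^ 2).
2:{ rewrite pow2_abs, ek, et. rewrite <- (Rmult_1_r (tT ^ 2)) at 1. rewrite <- Hxy. ring. }
rewrite Rpower_32 by exact Ha. rewrite ek.
replace ((tT * y) ^ 2) with (Rabs tT ^ 2 * y ^ 2) by (rewrite pow2_abs; ring).
field. split; lra.
Qed.


Theorem theorem6p7
  (a b : Rbar)
  (alpha T N B : R -> vec) (kappa tau : R -> R)
  (Halpha : frenet (ointerval a b) alpha T N B kappa tau)
  (phi : R -> R)
  (Hphi : forall s, ointerval a b s -> is_derive phi s (kappa s))
  (alphaT TT NT BT : R -> vec) (kappaT tauT : R -> R)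
  (HalphaT : forall s, ointerval a b s -> alphaT (phi s) = T s)
  (HalphaT_frenet : frenet (image_dom (ointerval a b) phi)
                      alphaT TT NT BT kappaT tauT)
  (x y z : R -> R)
  (beta Tb Nb Bb : R -> vec) (kappab taub : R -> R)
  (Hxyz : forall sT, image_dom (ointerval a b) phi sT ->
            x sT ^ 2 + y sT ^ 2 + z sT ^ 2 = 1)
  (HX : forall sT, image_dom (ointerval a b) phi sT ->
          Tb sT = vadd (vadd (vscal (x sT) (TT sT)) (vscal (y sT) (NT sT)))
                       (vscal (z sT) (BT sT)))
  (Hbeta : frenet (image_dom (ointerval a b) phi)
             beta Tb Nb Bb kappab taub)
  (HMannheim : forall sT, image_dom (ointerval a b) phi sT ->
                 Nb sT = BT sT) :
  (straight_line (ointerval a b) alpha <->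
     helix (image_dom (ointerval a b) phi) kappab taub) /\
  (slant_helix (ointerval a b) kappa tau <->
     slant_helix (image_dom (ointerval a b) phi) kappab taub).
Proof.
assert (Hk : forall s, ointerval a b s -> 0 < kappa s)
  by (intros s Is; destruct (Halpha s Is) as [_ [_ [_ [_ [kp _]]]]]; exact kp).
pose proof (J_open a b phi kappa Hphi Hk) as HJ.
pose proof (beta_part _ HJ alphaT TT NT BT kappaT tauT HalphaT_frenet x y z beta Tb Nb Bb
  kappab taub Hxyz HX Hbeta HMannheim) as BP.
pose proof (alpha_part a b alpha T N B kappa tau Halpha phi Hphi alphaT TT NT BT kappaT tauT
  HalphaT HalphaT_frenet) as AP.
assert (SB : forall u, image_dom (ointerval a b) phi u ->
  ex_derive (fun t => taub t / kappab t) u /\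
  kappab u ^ 2 / Rpower (kappab u ^ 2 + taub u ^ 2) (3 / 2)
      * Derive (fun t => taub t / kappab t) u = kappaT u / Rabs (tauT u)).
{ intros u Ju. destruct (BP u Ju) as [ek [et [Hxy [Hy [Dr _]]]]].
  destruct (Hbeta u Ju) as [_ [_ [_ [_ [kbp _]]]]].
  split. eexists; exact Dr.
  rewrite (is_derive_unique (fun t : R => taub t / kappab t) u _ Dr).
  apply (sigma_b_val _ _ _ _ (x u) (y u)); auto. }
destruct (classic (exists s0, ointerval a b s0)) as [[s0 Is0] | Hne].
2:{ assert (HJe : forall u, ~ image_dom (ointerval a b) phi u)
      by (intros u [s [Is _]]; apply Hne; exists s; exact Is).
    split; split; intros _.
    - exists 0. intros u Ju. exfalso; exact (HJe u Ju).
    - exists (0,0,0), (1,0,0). split. intro E. injection E; intros; lra.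
      intros s Is. exfalso; apply Hne; exists s; exact Is.
    - exists 0. intros u Ju. exfalso; exact (HJe u Ju).
    - exists 0. intros s Is. exfalso; apply Hne; exists s; exact Is. }
assert (J0 : image_dom (ointerval a b) phi (phi s0)) by (exists s0; auto).
split; split.
- intro H. exfalso. exact (not_line a b alpha T N B kappa tau Halpha s0 Is0 H).
- intros [C HC]. exfalso.
  destruct (BP _ J0) as [_ [_ [_ [Hy [Dr _]]]]].
  destruct (HalphaT_frenet _ J0) as [_ [_ [_ [_ [kTp _]]]]].
  assert (H0 : is_derive (fun t => taub t / kappab t) (phi s0) 0).
  { apply (is_derive_ext_loc (V := R_NormedModule) (fun _ => C)).
    apply (filter_imp (image_dom (ointerval a b) phi)). intros t Jt. symmetry. apply HC; exact Jt.
    apply HJ; exact J0. exact (is_derive_const (V := R_NormedModule) _ _). }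
  pose proof (der_uniq _ _ _ _ Dr H0) as E.
  assert (0 < kappaT (phi s0) / y (phi s0) ^ 2).
  { apply Rdiv_lt_0_compat. exact kTp. apply pow2_gt_0. exact Hy. }
  lra.
- intros [Ca HCa]. exists (/ Rabs Ca). intros u Ju.
  destruct (SB u Ju) as [Ex Ev]. split; [exact Ex|]. rewrite Ev.
  destruct Ju as [s [Is <-]].
  destruct (HCa s Is) as [_ Ha]. destruct (AP s Is) as [_ Ha']. rewrite Ha' in Ha.
  destruct (BP _ (ex_intro _ s (conj Is eq_refl))) as [ek _].
  destruct (Hbeta _ (ex_intro _ s (conj Is eq_refl))) as [_ [_ [_ [_ [kbp _]]]]].
  destruct (HalphaT_frenet _ (ex_intro _ s (conj Is eq_refl))) as [_ [_ [_ [_ [kTp _]]]]].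
  assert (tauT (phi s) <> 0) by (intro Hc; rewrite Hc in ek; lra).
  rewrite <- Ha. rewrite Rabs_div by lra. rewrite (Rabs_right (kappaT (phi s))) by lra.
  field. split; [lra | apply Rabs_no_R0; auto].
- intros [Cb HCb]. exists (tauT (phi s0) / kappaT (phi s0)). intros s Is.
  destruct (AP s Is) as [Ex Ev]. split; [exact Ex|]. rewrite Ev.
  assert (Js : image_dom (ointerval a b) phi (phi s)) by (exists s; auto).
  assert (F : forall u, image_dom (ointerval a b) phi u ->
     0 < kappaT u /\ 0 < kappab u /\ kappab u = tauT u * y u /\ kappaT u / Rabs (tauT u) = Cb).
  { intros u Ju. destruct (HalphaT_frenet _ Ju) as [_ [_ [_ [_ [kTp _]]]]].
    destruct (Hbeta _ Ju) as [_ [_ [_ [_ [kbp _]]]]].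
    destruct (BP _ Ju) as [ek _]. destruct (SB _ Ju) as [_ Ev'].
    destruct (HCb _ Ju) as [_ Ecb]. rewrite Ev' in Ecb. auto. }
  destruct (F _ Js) as [kT1 [kb1 [ek1 C1]]].
  destruct (F _ J0) as [kT0 [kb0 [ek0 C0]]].
  assert (Cy : forall t, ointerval a b t -> continuity_pt (fun t => y (phi t)) t).
  { intros t It. assert (Jt : image_dom (ointerval a b) phi (phi t)) by (exists t; auto).
    destruct (BP _ Jt) as [_ [_ [_ [_ [_ [dy Dy]]]]]].
    apply (der_cont _ _ _ (dcompR y phi t _ _ Dy (Hphi t It))). }
  assert (Ny : forall t, ointerval a b t -> y (phi t) <> 0).
  { intros t It. assert (Jt : image_dom (ointerval a b) phi (phi t)) by (exists t; auto).
    destruct (BP _ Jt) as [_ [_ [_ [Hy _]]]]. exact Hy. }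
  assert (SameSign : (0 < tauT (phi s0) /\ 0 < tauT (phi s)) \/ (tauT (phi s0) < 0 /\ tauT (phi s) < 0)).
  { destruct (Rlt_or_le 0 (y (phi s0))) as [P|P].
    - pose proof (sign_const a b (fun t => y (phi t)) Cy Ny s0 s Is0 Is P) as P'. simpl in P'.
      left. split; nra.
    - assert (P2 : 0 < - y (phi s0)) by (destruct P as [P|P]; [lra| exfalso; exact (Ny s0 Is0 P)]).
      assert (Cy' : forall t, ointerval a b t -> continuity_pt (fun t => - y (phi t)) t)
        by (intros t It; apply continuity_pt_opp; apply Cy; exact It).
      assert (Ny' : forall t, ointerval a b t -> - y (phi t) <> 0)
        by (intros t It Hc; apply (Ny t It); lra).
      pose proof (sign_const a b (fun t => - y (phi t)) Cy' Ny' s0 s Is0 Is P2) as P'. simpl in P'.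
      right. split; nra. }
  destruct SameSign as [[p0 p1] | [n0 n1]].
  + rewrite Rabs_right in C0, C1 by lra.
    rewrite <- C0 in C1. 
    assert (E : tauT (phi s) = tauT (phi s0) * kappaT (phi s) / kappaT (phi s0)).
    { apply (f_equal Rinv) in C1. rewrite !Rinv_div in C1. field_simplify_eq in C1; try lra.
      field_simplify_eq; try lra. }
    rewrite E. field. split; lra.
  + rewrite Rabs_left in C0, C1 by lra.
    rewrite <- C0 in C1.
    assert (E : tauT (phi s) = tauT (phi s0) * kappaT (phi s) / kappaT (phi s0)).
    { apply (f_equal Rinv) in C1. rewrite !Rinv_div in C1. field_simplify_eq in C1; try lra.
      field_simplify_eq; try lra. }
    rewrite E. field. split; lra.
Qed.
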